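(* Let $G=(V,E)$ be a connected simple undirected graph and $c\in\mathbb{R}^n$ a vector with strictly positive components satisfying $\sum_{j\in S}c_j^2=\sum_{j\in N(S)}c_j^2$ for every $S\in\mathcal{S}_1$. Let $\mathcal{F}$ be the family of sets $S\in\mathcal{S}_2$ such that (a) there is no partition $S=S'\cup S''$ of $S$ into two nonempty disjoint sets with $N(S')\cap N(S'')=\emptyset$, and (b) there is no stable set $S'$ with $S\subsetneq S'$ and $N(S')=N(S)$. Then $\sum_{j\in S}c_j^2<\sum_{j\in N(S)}c_j^2$ holds for every $S\in\mathcal{S}_2$ if and only if it holds for every $S\in\mathcal{F}$.
   Context: For $S\subseteq V$, $N(S)=\{j\in V\setminus S:\ \exists\, i\in S \text{ with } \{i,j\}\in E\}$. A set $S\subseteq V$ is stable if no two elements of $S$ are joined by an edge. $\mathcal{S}_1$ is the family of nonempty stable sets $S\subseteq V$ such that there is no edge $\{k,\ell\}\in E$ with $k\notin S$ and $\ell\notin S$; $\mathcal{S}_2$ is the family of nonempty stable sets $S\subseteq V$ such that there exists an edge $\{k,\ell\}\in E$ with $k\notin S$ and $\ell\notin S$. *)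

(* Defs.v *)
From mathcomp Require Import all_boot all_order all_algebra.
From mathcomp Require Import reals.
Set Implicit Arguments. Unset Strict Implicit. Unset Printing Implicit Defensive.
Import Order.TTheory GRing.Theory Num.Theory.
Local Open Scope ring_scope.

Definition simple_graph (n : nat) (e : rel 'I_n) : Prop :=
  irreflexive e /\ symmetric e.

Definition connected_graph (n : nat) (e : rel 'I_n) : Prop :=
  forall i j : 'I_n, connect e i j.

Definition nbh (n : nat) (e : rel 'I_n) (S : {set 'I_n}) : {set 'I_n} :=
  [set j | (j \notin S) && [exists i in S, e i j]].

Definition stable (n : nat) (e : rel 'I_n) (S : {set 'I_n}) : bool :=
  [forall i in S, forall j in S, ~~ e i j].

Definition inS1 (n : nat) (e : rel 'I_n) (S : {set 'I_n}) : bool :=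
  [&& S != set0, stable e S &
      ~~ [exists k, exists l, [&& e k l, k \notin S & l \notin S]]].

Definition inS2 (n : nat) (e : rel 'I_n) (S : {set 'I_n}) : bool :=
  [&& S != set0, stable e S &
      [exists k, exists l, [&& e k l, k \notin S & l \notin S]]].

Definition inF (n : nat) (e : rel 'I_n) (S : {set 'I_n}) : Prop :=
  inS2 e S /\
  (~ exists S' S'' : {set 'I_n},
        [/\ S' != set0, S'' != set0, [disjoint S' & S''], S' :|: S'' = S &
            nbh e S' :&: nbh e S'' = set0]) /\
  (~ exists S' : {set 'I_n},
        [/\ stable e S', S \proper S' & nbh e S' = nbh e S]).

Definition sumsq (R : realType) (n : nat) (c : 'I_n -> R) (S : {set 'I_n}) : R :=
  \sum_(j in S) c j ^+ 2.

(* Main.v *)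
Require Import Defs.
From mathcomp Require Import all_boot all_order all_algebra.
From mathcomp Require Import reals.
From Stdlib Require Import Classical.
Import Order.TTheory GRing.Theory Num.Theory.
Local Open Scope ring_scope.

Lemma sumsqU (R : realType) (n : nat) (c : 'I_n -> R) (A B : {set 'I_n}) :
  [disjoint A & B] -> sumsq c (A :|: B) = sumsq c A + sumsq c B.
Proof.
move=> dAB; rewrite /sumsq (big_setID A) /=.
have -> : (A :|: B) :&: A = A by rewrite setUK.
have -> : (A :|: B) :\: A = B.
  apply/setP=> x; rewrite !inE; case xA: (x \in A); case xB: (x \in B) => //=.
  by rewrite (disjointFr dAB xA) in xB.
by [].
Qed.

Lemma sumsq_gt0 (R : realType) (n : nat) (c : 'I_n -> R) (A : {set 'I_n}) :
  (forall j, 0 < c j) -> A != set0 -> 0 < sumsq c A.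
Proof.
move=> cp /set0Pn [a aA]; rewrite /sumsq (big_setD1 a aA) /=.
apply: ltr_pwDl; first by rewrite exprn_gt0.
by apply: sumr_ge0 => i _; rewrite exprn_ge0 // ltW.
Qed.

Lemma sumsq_proper (R : realType) (n : nat) (c : 'I_n -> R) (A B : {set 'I_n}) :
  (forall j, 0 < c j) -> A \proper B -> sumsq c A < sumsq c B.
Proof.
move=> cp pAB; have sAB := proper_sub pAB.
have -> : B = A :|: (B :\: A) by rewrite -{1}(setID B A) (setIidPr sAB).
rewrite sumsqU; last first.
  by rewrite -setI_eq0; apply/eqP/setP=> x; rewrite !inE; case: (x \in A); rewrite ?andbF.
rewrite ltrDl; apply: sumsq_gt0 => //.
apply/set0Pn; move/properP: pAB => [_ [x xB xA]]; exists x; by rewrite inE xA.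
Qed.

Lemma stable_sub (n : nat) (e : rel 'I_n) (S T : {set 'I_n}) :
  stable e S -> T \subset S -> stable e T.
Proof.
move=> /forallP st sTS; apply/forallP=> i; apply/implyP=> iT.
apply/forallP=> j; apply/implyP=> jT.
by move: (st i) => /implyP /(_ (subsetP sTS _ iT)) /forallP /(_ j) /implyP /(_ (subsetP sTS _ jT)).
Qed.

Lemma stableP (n : nat) (e : rel 'I_n) (S : {set 'I_n}) i j :
  stable e S -> i \in S -> j \in S -> ~~ e i j.
Proof.
by move=> /forallP st iS jS; move: (st i) => /implyP /(_ iS) /forallP /(_ j) /implyP /(_ jS).
Qed.

Arguments stableP [n e S i j].
Arguments stable_sub [n e S T].
Arguments sumsq_gt0 [R n c A].

Lemma nbh_sub (n : nat) (e : rel 'I_n) (S T : {set 'I_n}) :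
  stable e S -> T \subset S -> nbh e T \subset nbh e S.
Proof.
move=> st sTS; apply/subsetP=> j; rewrite !inE => /andP [jT /existsP [i /andP [iT eij]]].
apply/andP; split; last by apply/existsP; exists i; rewrite (subsetP sTS _ iT).
apply/negP=> jS; by move: (stableP st (subsetP sTS _ iT) jS); rewrite eij.
Qed.

Arguments nbh_sub [n e S T].

Lemma nbhU (n : nat) (e : rel 'I_n) (A B : {set 'I_n}) :
  stable e (A :|: B) -> nbh e (A :|: B) = nbh e A :|: nbh e B.
Proof.
move=> st; apply/eqP; rewrite eqEsubset; apply/andP; split; last first.
  by rewrite subUset !nbh_sub // ?subsetUl ?subsetUr.
apply/subsetP=> j; rewrite !inE negb_or => /andP [/andP [jA jB] /existsP [i /andP [iS eij]]].
move: iS; rewrite inE => /orP [iA|iB].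
  by rewrite jA /=; apply/orP; left; apply/existsP; exists i; rewrite iA.
by apply/orP; right; rewrite jB; apply/existsP; exists i; rewrite iB.
Qed.

Lemma inS2_sub (n : nat) (e : rel 'I_n) (S T : {set 'I_n}) :
  inS2 e S -> T \subset S -> T != set0 -> inS2 e T.
Proof.
move=> /and3P [_ st /existsP [k /existsP [l /and3P [ekl kS lS]]]] sTS T0.
rewrite /inS2 T0 (stable_sub st sTS) /=; apply/existsP; exists k; apply/existsP; exists l.
rewrite ekl /=; apply/andP; split; apply/negP=> h.
  by move: (subsetP sTS _ h); rewrite (negbTE kS).
by move: (subsetP sTS _ h); rewrite (negbTE lS).
Qed.

Lemma S1orS2 (n : nat) (e : rel 'I_n) (S : {set 'I_n}) :
  S != set0 -> stable e S -> inS1 e S \/ inS2 e S.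
Proof.
by move=> S0 st; rewrite /inS1 /inS2 S0 st /=; case: [exists k, _]; [right|left].
Qed.

Lemma S1notS2 (n : nat) (e : rel 'I_n) (S : {set 'I_n}) :
  inS1 e S -> inS2 e S -> False.
Proof. by move=> /and3P [_ _ /negP h] /and3P [_ _ h2]. Qed.

Lemma nbh_nonempty (n : nat) (e : rel 'I_n) (B : {set 'I_n}) :
  symmetric e -> connected_graph e -> inS2 e B -> nbh e B != set0.
Proof.
move=> sym con /and3P [/set0Pn [b bB] _ /existsP [k /existsP [l /and3P [ekl kB lB]]]].
apply/negP=> /eqP N0.
have cl : closed e (mem B).
  have h : forall x y, e x y -> x \in B -> y \in B.
    move=> x y exy xB; apply/negPn/negP=> yB.
    have : y \in nbh e B by rewrite inE yB /=; apply/existsP; exists x; rewrite xB.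
    by rewrite N0 inE.
  move=> x y exy; apply/idP/idP; first exact: h.
  by apply: h; rewrite sym.
move: (closed_connect cl (con b k)); change ((b \in B) = (k \in B) -> False); by rewrite bB (negbTE kB).
Qed.

From mathcomp Require Import zify.

Lemma cardle (n : nat) (S : {set 'I_n}) : (#|S| <= n)%N.
Proof. by have := max_card (mem S); rewrite card_ord. Qed.

Lemma meas_lt (a b x y m : nat) : (a < b)%N -> (x < m)%N -> (a * m + x < b * m + y)%N.
Proof.
move=> ab xm; apply: (@leq_trans (a.+1 * m)).
  rewrite mulSn; set am := (a * m)%N; lia.
by apply: leq_trans (leq_addr _ _); rewrite leq_mul2r ab orbT.
Qed.

Theorem mainTheorem2 (R : realType) (n : nat) (e : rel 'I_n) (c : 'I_n -> R) :
  simple_graph e -> connected_graph e ->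
  (forall j, 0 < c j) ->
  (forall S : {set 'I_n}, inS1 e S -> sumsq c S = sumsq c (nbh e S)) ->
  ((forall S : {set 'I_n}, inS2 e S -> sumsq c S < sumsq c (nbh e S)) <->
   (forall S : {set 'I_n}, inF e S -> sumsq c S < sumsq c (nbh e S))).
Proof.
move=> [_ sym] con cp H1; split.
  by move=> H S [S2 _]; exact: H S S2.
move=> HF.
suff key : forall k S, (#|nbh e S| * n.+1 + (n - #|S|) < k)%N -> inS2 e S ->
    sumsq c S < sumsq c (nbh e S).
  by move=> S; exact: key _ S (ltnSn _).
elim=> [//|k IH] S hk S2.
have stS : stable e S by case/and3P: S2.
have S0 : S != set0 by case/and3P: S2.
have cardS := @cardle n S.
case: (classic (exists S' S'' : {set 'I_n},
        [/\ S' != set0, S'' != set0, [disjoint S' & S''], S' :|: S'' = S &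
            nbh e S' :&: nbh e S'' = set0])) => [[A [B [A0 B0 dAB UAB NAB]]]|nA].
  subst S.
  have dN : [disjoint nbh e A & nbh e B] by rewrite -setI_eq0 NAB.
  have cN : #|nbh e (A :|: B)| = (#|nbh e A| + #|nbh e B|)%N.
    by rewrite nbhU // cardsU NAB cards0 subn0.
  have S2A : inS2 e A by apply: inS2_sub S2 (subsetUl _ _) A0.
  have S2B : inS2 e B by apply: inS2_sub S2 (subsetUr _ _) B0.
  have pA : (0 < #|nbh e A|)%N by rewrite card_gt0; exact: nbh_nonempty sym con S2A.
  have pB : (0 < #|nbh e B|)%N by rewrite card_gt0; exact: nbh_nonempty sym con S2B.
  have cardA := @cardle n A.
  have cardB := @cardle n B.
  rewrite ltnS in hk.
  rewrite nbhU // sumsqU // sumsqU //; apply: ltrD; apply: IH => //.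
    apply: leq_trans _ hk; rewrite cN; apply: meas_lt; lia.
  apply: leq_trans _ hk; rewrite cN; apply: meas_lt; lia.
case: (classic (exists S' : {set 'I_n},
        [/\ stable e S', S \proper S' & nbh e S' = nbh e S])) => [[T [stT pST NT]]|nB].
  have T0 : T != set0.
    apply/set0Pn; case/set0Pn: S0 => x xS; exists x; exact: subsetP (proper_sub pST) _ xS.
  apply: (lt_le_trans (@sumsq_proper _ _ c _ _ cp pST)).
  case: (@S1orS2 n e T T0 stT) => [T1|T2].
    by rewrite H1 // NT.
  rewrite -NT; apply/ltW; apply: IH => //.
  have cardT := @cardle n T.
  have := proper_card pST; move: hk; rewrite NT.
  set m := (#|nbh e S| * n.+1)%N; lia.
exact: HF S (conj S2 (conj nA nB)).
Qed.
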